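(* Let $n\ge1$, $D\ge1$, and let $X_n=\{\mathbf{x}^0,\ldots,\mathbf{x}^{n-1}\}\subseteq\{0,1\}^D$ consist of $n$ pairwise distinct vectors, indexed so that $\mathbf{a}\cdot\mathbf{x}^0<\cdots<\mathbf{a}\cdot\mathbf{x}^{n-1}$ for some $\mathbf{a}\in\mathbb{Z}^D$. Then there is a three-layer Boolean threshold network with $D$ input nodes, $n$ nodes in the second layer and $\lceil\log_2 n\rceil$ output nodes that maps $\mathbf{x}^i$ to the $\lceil\log_2 n\rceil$-dimensional binary representation of $i$, for every $i=0,\ldots,n-1$.
   Context: A Boolean threshold function is a map $\{0,1\}^h\to\{0,1\}$, $\mathbf{u}\mapsto[\mathbf{w}\cdot\mathbf{u}\ge\theta]$ (value $1$ iff $\mathbf{w}\cdot\mathbf{u}\ge\theta$) with $\mathbf{w}\in\mathbb{Z}^h,\theta\in\mathbb{Z}$. An $L$-layer Boolean threshold network has layers $1,\ldots,L$; layer $1$ is the input; each node of layer $t+1$ computes a Boolean threshold function of the values of layer $t$; the network computes the map input $\mapsto$ values of layer $L$. *)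

(* Defs.v *)
From mathcomp Require Import all_boot all_order all_algebra.
Set Implicit Arguments. Unset Strict Implicit. Unset Printing Implicit Defensive.
Import GRing.Theory Num.Theory.
Local Open Scope ring_scope.

Definition threshold (h : nat) (w : 'I_h -> int) (theta : int)
  (u : 'I_h -> bool) : bool :=
  theta <= \sum_(k < h) w k * (u k)%:R.

Definition layer (h h' : nat) (W : 'I_h' -> 'I_h -> int) (Th : 'I_h' -> int)
  (u : 'I_h -> bool) : 'I_h' -> bool :=
  fun j => threshold (W j) (Th j) u.

Definition net3 (h1 h2 h3 : nat)
  (W1 : 'I_h2 -> 'I_h1 -> int) (T1 : 'I_h2 -> int)
  (W2 : 'I_h3 -> 'I_h2 -> int) (T2 : 'I_h3 -> int)
  (u : 'I_h1 -> bool) : 'I_h3 -> bool :=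
  layer W2 T2 (layer W1 T1 u).

Definition dotb (D : nat) (a : 'I_D -> int) (x : 'I_D -> bool) : int :=
  \sum_(k < D) a k * (x k)%:R.

(* ceil(log2 n) (= up_log 2 n: smallest e with n <= 2^e). *)
Definition clog2 (n : nat) : nat := up_log 2 n.

(* The m-bit binary representation of i: bit j is the coefficient of 2^j. *)
Definition binrep (m i : nat) : 'I_m -> bool := fun j => odd (i %/ 2 ^ j).

(* Main.v *)
Require Import Defs.
From mathcomp Require Import all_boot all_order all_algebra.
Import Order.TTheory GRing.Theory Num.Theory.
Local Open Scope ring_scope.

Definition fb (b j : nat) : int := (odd (j %/ 2 ^ b))%:R.
Definition gb (b j : nat) : int := if j is k.+1 then fb b k else 0.

Lemma telesc (b m : nat) : \sum_(0 <= j < m.+1) (fb b j - gb b j) = fb b m.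
Proof.
elim: m => [|m IH]; first by rewrite big_nat1 /= subr0.
by rewrite big_nat_recr //= IH addrC subrK.
Qed.

Lemma sum_ind (b n i : nat) : (i < n)%N ->
  \sum_(j < n) (fb b j - gb b j) * ((j <= i)%N : bool)%:R = fb b i.
Proof.
move=> lt.
rewrite -(big_mkord xpredT (fun j => (fb b j - gb b j) * ((j <= i)%N : bool)%:R)).
rewrite (big_cat_nat _ (n:=i.+1)) //= ?ltnW //.
rewrite [X in _ + X]big_nat_cond [X in _ + X]big1 ?addr0; last first.
  move=> j /andP [/andP [H1 _] _]; by rewrite leqNgt H1 mulr0.
rewrite big_nat_cond -[RHS](telesc b i) [RHS]big_nat_cond.
apply: eq_bigr => j /andP [/andP [_ H] _]; by rewrite ltnS in H; rewrite H mulr1.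
Qed.

Theorem theorem14 (n D : nat) (hn : (1 <= n)%N) (hD : (1 <= D)%N)
  (x : 'I_n -> 'I_D -> bool) (a : 'I_D -> int)
  (hdist : injective x)
  (hx : forall i j : 'I_n, (i < j)%N -> dotb a (x i) < dotb a (x j)) :
  exists (W1 : 'I_n -> 'I_D -> int) (T1 : 'I_n -> int)
         (W2 : 'I_(clog2 n) -> 'I_n -> int) (T2 : 'I_(clog2 n) -> int),
    forall i : 'I_n, net3 W1 T1 W2 T2 (x i) =1 @binrep (clog2 n) i.
Proof.
exists (fun _ => a), (fun j => dotb a (x j)),
  (fun b j => fb b j - gb b j), (fun _ => 1).
move=> i b.
rewrite /net3 /layer /threshold.
have L1 : forall j : 'I_n,
  (dotb a (x j) <= \sum_(k < D) a k * (x i k)%:R) = (j <= i)%N.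
  move=> j; rewrite -/(dotb a (x i)).
  case: (ltngtP j i) => H.
  - by rewrite le_eqVlt hx ?orbT.
  - by apply/negbTE; rewrite -ltNge; apply: hx.
  - by rewrite (val_inj H) lexx.
under eq_bigr => j _ do rewrite L1.
rewrite sum_ind //= /fb /binrep.
by case: (odd _).
Qed.
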